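(* Let $G$ be a graph and let $S$ be the set of vertices covered by a maximal (under inclusion) collection of pairwise edge-disjoint induced paws in $G$. Then every vertex $s\in S$ is adjacent to at most one connected component of $G-S$ that is a complete multipartite graph.
   Context: The paw is the graph on four vertices $x_1,x_2,x_3,x_4$ with edges $x_1x_2,x_2x_3,x_1x_3,x_3x_4$. A complete multipartite graph here means one whose vertex set is partitioned into at least three nonempty independent sets (parts) with all edges between different parts present (in particular it contains a triangle). *)

(* Defs.v *)
(* Finite simple graph: T : finType, e : rel T symmetric, irreflexive. *)
From mathcomp Require Import all_boot.
Set Implicit Arguments. Unset Strict Implicit. Unset Printing Implicit Defensive.

Section Graphs.
Variables (T : finType) (e : rel T).

Definition paw_verts (p : T * T * T * T) : {set T} :=
  let: (x1, x2, x3, x4) := p in [set x1; x2; x3; x4].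

Definition paw_edges (p : T * T * T * T) : {set {set T}} :=
  let: (x1, x2, x3, x4) := p in
  [set [set x1; x2]; [set x2; x3]; [set x1; x3]; [set x3; x4]].

Definition induced_paw (p : T * T * T * T) : bool :=
  let: (x1, x2, x3, x4) := p in
  [&& uniq [:: x1; x2; x3; x4],
      e x1 x2, e x2 x3, e x1 x3, e x3 x4,
      ~~ e x1 x4 & ~~ e x2 x4].

Definition edge_disjoint (p q : T * T * T * T) : bool :=
  [disjoint paw_edges p & paw_edges q].

Definition paw_packing (Q : {set T * T * T * T}) : bool :=
  [forall p in Q, induced_paw p] &&
  [forall p in Q, forall q in Q, (p != q) ==> edge_disjoint p q].

Definition maximal_paw_packing (Q : {set T * T * T * T}) : Prop :=
  paw_packing Q /\
  forall Q' : {set T * T * T * T}, Q \subset Q' -> paw_packing Q' -> Q' = Q.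

Definition covered (Q : {set T * T * T * T}) : {set T} :=
  \bigcup_(p in Q) paw_verts p.

Definition induced_rel (A : {set T}) : rel T :=
  fun x y => [&& e x y, x \in A & y \in A].

Definition component_of_minus (S C : {set T}) : Prop :=
  exists2 x, x \notin S & C = [set y | connect (induced_rel (~: S)) x y].

Definition complete_multipartite (C : {set T}) : Prop :=
  exists P : {set {set T}},
    [/\ partition P C, 3 <= #|P| &
        forall x y, x \in C -> y \in C -> e x y = (pblock P x != pblock P y)].

Definition adjacent_to (s : T) (C : {set T}) : bool :=
  [exists y in C, e s y].

End Graphs.

(* Main.v *)
Require Import Defs.
From mathcomp Require Import all_boot.
Set Implicit Arguments. Unset Strict Implicit. Unset Printing Implicit Defensive.

Section Aux.
Variables (T : finType) (e : rel T) (e_sym : symmetric e) (e_irr : irreflexive e).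

Lemma path_notin (S : {set T}) x p :
  path (induced_rel e (~: S)) x p -> x \notin S -> last x p \notin S.
Proof.
elim: p x => [|z p IH] x //= /andP [/and3P [_ _ zS] pp] _.
by apply: (IH z pp); rewrite inE in zS.
Qed.

Lemma comp_notin S C y : component_of_minus e S C -> y \in C -> y \notin S.
Proof.
move=> [x xS ->]; rewrite inE => /connectP [p pp ->].
exact: path_notin.
Qed.

Lemma comp_eq S C1 C2 a b : component_of_minus e S C1 -> component_of_minus e S C2 ->
  a \in C1 -> b \in C2 -> connect (induced_rel e (~: S)) a b -> C1 = C2.
Proof.
have hs : connect_sym (induced_rel e (~: S)).
  apply: sym_connect_sym => x y; rewrite /induced_rel e_sym.
  by case: (e y x); rewrite //= andbC.
move=> [x1 _ ->] [x2 _ ->]; rewrite !inE => h1 h2 hab.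
have h12 : connect (induced_rel e (~: S)) x1 x2.
  apply: connect_trans h1 _; apply: connect_trans hab _; by rewrite hs.
apply/setP => y; rewrite !inE; exact: (same_connect hs h12).
Qed.

Lemma verts_sub (Q : {set T * T * T * T}) q : q \in Q -> paw_verts q \subset covered Q.
Proof. move=> qQ; exact: (bigcup_sup q qQ). Qed.

Lemma edges_sub (q : T * T * T * T) E : E \in paw_edges q -> E \subset paw_verts q.
Proof.
case: q => [[[x1 x2] x3] x4] /=.
rewrite !inE -!orbA.
move=> /or4P [] /eqP -> ; apply/subsetP => z; rewrite !inE;
  by case/orP => ->; rewrite ?orbT.
Qed.

Lemma no_extend (Q : {set T * T * T * T}) x1 x2 x3 x4 :
  maximal_paw_packing e Q -> induced_paw e (x1, x2, x3, x4) ->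
  x1 \notin covered Q -> x2 \notin covered Q ->
  (x3 \notin covered Q) || (x4 \notin covered Q) -> False.
Proof.
move=> [pack mx] ip n1 n2 n34.
set p := (x1, x2, x3, x4).
have disj : forall q, q \in Q -> edge_disjoint p q.
  move=> q qQ; rewrite /edge_disjoint disjoint_subset; apply/subsetP => E Ep; rewrite inE; apply/negP => Eq.
  have sub : E \subset covered Q.
    exact: subset_trans (edges_sub Eq) (verts_sub qQ).
  move: Ep; rewrite !inE -!orbA => /or4P [] /eqP EE; rewrite EE in sub.
  - by move: n1; rewrite (subsetP sub) // !inE eqxx.
  - by move: n2; rewrite (subsetP sub) // !inE eqxx.
  - by move: n1; rewrite (subsetP sub) // !inE eqxx.
  - case/orP: n34.
    + by rewrite (subsetP sub) // !inE eqxx.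
    + by rewrite (subsetP sub) // !inE eqxx orbT.
case/andP: pack => /forall_inP ipQ /forall_inP dQ.
have pk : paw_packing e (p |: Q).
  apply/andP; split.
    apply/forall_inP => r; rewrite !inE => /orP [/eqP -> //|]; exact: ipQ.
  apply/forall_inP => r; rewrite !inE => /orP [/eqP ->|rQ];
    apply/forall_inP => r'; rewrite !inE => /orP [/eqP ->|r'Q];
    apply/implyP => ne.
  - by rewrite eqxx in ne.
  - exact: disj.
  - rewrite /edge_disjoint disjoint_sym; exact: disj.
  - by move/forall_inP: (dQ r rQ) => /(_ r' r'Q) /implyP; apply.
have := mx _ (subsetUr _ _) pk => eq.
have pQ : p \in Q by rewrite -eq setU11.
by move: n1; rewrite (subsetP (verts_sub pQ)) // !inE eqxx.
Qed.

Lemma mk_paw a b c d : a != b -> a != c -> a != d -> b != c -> b != d -> c != d ->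
  e a b -> e b c -> e a c -> e c d -> ~~ e a d -> ~~ e b d -> induced_paw e (a, b, c, d).
Proof.
move=> ab ac ad bc bd cd eab ebc eac ecd nad nbd.
rewrite /induced_paw /= !inE !negb_or ab ac ad bc bd cd eab ebc eac ecd nad nbd.
done.
Qed.

Lemma ne_of_e x y : e x y -> x != y.
Proof. by apply: contraTneq => ->; rewrite e_irr. Qed.

Lemma triangle C y : complete_multipartite e C -> y \in C ->
  exists b c, [/\ b \in C, c \in C, e y b, e y c & e b c].
Proof.
move=> [P [/and3P [/eqP cov triv n0] cP hP]] yC.
have yc : y \in cover P by rewrite cov.
have B1P := pblock_mem yc.
have : 1 < #|P :\ pblock P y|.
  by move: cP; rewrite (cardsD1 (pblock P y)) B1P.
case/card_gt1P => B2 [B3 [B2in B3in ne23]].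
move: B2in B3in; rewrite !inE => /andP [n12 B2P] /andP [n13 B3P].
have [b bB2] : exists b, b \in B2.
  apply/set0Pn; apply: contraNneq n0 => <-; done.
have [c cB3] : exists c, c \in B3.
  apply/set0Pn; apply: contraNneq n0 => <-; done.
have bC : b \in C by rewrite -cov; exact: (subsetP (bigcup_sup B2 B2P)).
have cC : c \in C by rewrite -cov; exact: (subsetP (bigcup_sup B3 B3P)).
have pb := def_pblock triv B2P bB2.
have pc := def_pblock triv B3P cB3.
exists b, c; split => //.
- by rewrite hP // pb eq_sym.
- by rewrite hP // pc eq_sym.
- by rewrite hP // pb pc.
Qed.

End Aux.

Theorem lemma4 (T : finType) (e : rel T) (e_sym : symmetric e)
  (e_irr : irreflexive e) (Q : {set T * T * T * T}) :
  maximal_paw_packing e Q ->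
  forall s, s \in covered Q ->
  forall C1 C2 : {set T},
    component_of_minus e (covered Q) C1 -> complete_multipartite e C1 ->
    adjacent_to e s C1 ->
    component_of_minus e (covered Q) C2 -> complete_multipartite e C2 ->
    adjacent_to e s C2 ->
    C1 = C2.
Proof.
move=> mQ s sS C1 C2 c1 m1 /exists_inP [y1 y1C es1] c2 m2 /exists_inP [y2 y2C es2].
case: (eqVneq C1 C2) => // ne; exfalso.
set S := covered Q in sS c1 c2.
have y1S := comp_notin c1 y1C.
have y2S := comp_notin c2 y2C.
have eqC : forall a, a \in C1 -> e a y2 -> False.
  move=> a aC ea; move/eqP: ne; apply.
  apply: (comp_eq e_sym c1 c2 aC y2C); apply: connect1.
  by rewrite /induced_rel ea !inE (comp_notin c1 aC) y2S.
have y2n1 : y2 \notin C1.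
  apply/negP => h; move/eqP: ne; apply; exact: (comp_eq e_sym c1 c2 h y2C).
have nS : forall a b, a \notin S -> b \in S -> a != b.
  by move=> a b aS bS; apply: contraNneq aS => ->.
have nC : forall a b, a \in C1 -> b \notin C1 -> a != b.
  by move=> a b aS bS; apply: contraNneq bS => <-.
have [b [c [bC cC eyb eyc ebc]]] := triangle m1 y1C.
have bS := comp_notin c1 bC.
have cS := comp_notin c1 cC.
have tri : forall a, a \in C1 -> e y1 a -> e s a -> False.
  move=> a aC ey ea.
  have aS := comp_notin c1 aC.
  apply: (no_extend (x1:=y1) (x2:=a) (x3:=s) (x4:=y2) mQ) => //; last by rewrite y2S orbT.
  apply: mk_paw => //.
  all: try (by apply: ne_of_e); try (by rewrite eq_sym; apply: ne_of_e);
  try (by apply: nS); try (by rewrite eq_sym; apply: nS); try (by apply: nC);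
  try (by rewrite e_sym).
  - by apply/negP => h; apply: (eqC y1).
  - by apply/negP => h; apply: (eqC a).
have nsb : ~~ e s b by apply/negP => h; apply: (tri b).
have nsc : ~~ e s c by apply/negP => h; apply: (tri c).
apply: (no_extend (x1:=b) (x2:=c) (x3:=y1) (x4:=s) mQ) => //; last by rewrite y1S.
apply: mk_paw => //.
all: try (by apply: ne_of_e); try (by rewrite eq_sym; apply: ne_of_e);
  try (by apply: nS); try (by rewrite eq_sym; apply: nS); try (by apply: nC);
  try (by rewrite e_sym).
Qed.
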